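(* Fix $\theta\in\mathcal B_0$ and a moment order $k\in[L]$, and suppose that, on an event of probability at least $1-\zeta$, the inlier stability condition holds for the cloud $\{\check g^{(k)}_n(\theta)\}_{n=1}^N$ with mean $\mu^{(k)}_g(\theta)$, covariance $\Sigma^{(k)}_g(\theta)$ and constants $\delta_{\mu,k}(\zeta),\delta_{\Sigma,k}(\zeta)$. Let $\hat w^{(k)}(\theta)=\bar w^{[s]}\in\Delta_{N,\epsilon}$ be the weight vector output by the outer-loop procedure at a terminating iteration $s$ with center $\hat\mu^{[s]}$. Then, on that event, $$\Big\|\sum_{n=1}^N\hat w^{(k)}_n(\theta)\check g^{(k)}_n(\theta)-\mu^{(k)}_g(\theta)\Big\|_2\le\delta_{\mu,k}(\zeta)+\alpha_\epsilon\sqrt{C_k},\qquad\alpha_\epsilon=\sqrt{\tfrac{\epsilon}{1-2\epsilon}},$$ where either (a) $C_k=C_{stop,k}$ is the stopping threshold that the terminating certificate satisfies, $\gamma(\bar w^{[s]};\hat\mu^{[s]})\le C_{stop,k}$; or (b) the certificate is produced by the MW–MMW rounds, so that $\gamma(\bar w^{[s]};\hat\mu^{[s]})\le\mathrm{OPT}(\hat\mu^{[s]})+\delta_{T,k}$, the error satisfies $\|\hat\mu^{[s]}-\mu^{(k)}_g(\theta)\|_2\le R_k$, and $$C_k=\sup_{\theta'\in\mathcal B_0}\|\Sigma^{(k)}_g(\theta')\|_{op}+\delta_{\Sigma,k}(\zeta)+(\delta_{\mu,k}(\zeta)+R_k)^2+\delta_{T,k},\quad \delta_{T,k}\le4\nu_k\Big(\sqrt{\tfrac{\log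 p}{T}}+\sqrt{\tfrac{\log(1/(1-\epsilon))}{T}}\Big),$$ with $\nu_k=\max_{i,j}\|\check g^{(k)}_i(\theta)-\check g^{(k)}_j(\theta)\|_2^2$.
   Context: Fix $\epsilon\in[0,1/3)$, $\zeta\in(0,1)$, a parameter set $\Theta\subseteq\mathbb R^p$ and a ball $\mathcal B_0\subseteq\Theta$. For each moment order $k\in[L]$ and $\theta$, $\check g^{(k)}_1(\theta),\dots,\check g^{(k)}_N(\theta)\in\mathbb R^p$ are (contaminated) per-observation gradients. For an index set $I$ and $\epsilon'\in[0,1)$, $\Delta_{I,\epsilon'}=\{w\in\mathbb R^I:\sum_{n\in I}w_n=1,0\le w_n\le\frac1{(1-\epsilon')|I|}\}$, $\Delta_{N,\epsilon}=\Delta_{[N],\epsilon}$. For vectors $g_1,\dots,g_N$ and a center $\hat\mu$: $S(w;\hat\mu)=\sum_nw_n(g_n-\hat\mu)(g_n-\hat\mu)^\top$, $\gamma(w;\hat\mu)=\|S(w;\hat\mu)\|_{op}$, $\mathrm{OPT}(\hat\mu)=\min_{w\in\Delta_{N,\epsilon}}\max_{\rho\succeq0,\mathrm{Tr}\rho=1}\mathrm{Tr}(S(w;\hat\mu)\rho)$. Inlier stability condition for a cloud $g_1,\dots,g_N$ with mean $\mu_g$, PSD $\Sigma_g$, constants $\delta_\mu,\delta_\Sigma$: there is a partition $[N]=I_{in}\sqcup I_{out}$ with $|I_{out}|\le\epsilon N$ such that for all $w\in\Delta_{I_{in},\epsilon/(1-\epsilon)}$, $\|\sum_{n\in I_{in}}w_n(g_n-\mu_g)\|_2\le\delta_\mu$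 and $\sum_{n\in I_{in}}w_n(g_n-\mu_g)(g_n-\mu_g)^\top\preceq\Sigma_g+\delta_\Sigma I$. Outer-loop procedure (spectral gradient reweighting): start from a center $\hat\mu^{[1]}$ in the convex hull of the cloud; at iteration $s$ compute weights $\bar w^{[s]}\in\Delta_{N,\epsilon}$ (via multiplicative-weights / matrix-multiplicative-weights rounds with $T$ inner iterations) for the fixed center $\hat\mu^{[s]}$; stop if $\gamma(\bar w^{[s]};\hat\mu^{[s]})\le C_{stop,k}$, otherwise set $\hat\mu^{[s+1]}=\sum_n\bar w^{[s]}_ng_n$. *)

(* Defs.v *)
From HB Require Import structures.
From mathcomp Require Import all_boot all_order all_algebra.
From mathcomp Require Import all_classical all_reals all_analysis.
Set Implicit Arguments. Unset Strict Implicit. Unset Printing Implicit Defensive.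
Import Order.TTheory GRing.Theory Num.Theory.
Local Open Scope classical_set_scope.
Local Open Scope ring_scope.

Section Defs.
Variable R : realType.

Definition norm2 (p : nat) (x : 'cV[R]_p) : R :=
  Num.sqrt (\sum_(i < p) x i ord0 ^+ 2).

Definition opnorm (p : nat) (A : 'M[R]_p) : R :=
  sup [set norm2 (A *m x) | x in [set x : 'cV[R]_p | norm2 x <= 1]].

Definition psd (p : nat) (A : 'M[R]_p) : Prop :=
  A^T = A /\ forall x : 'cV[R]_p, 0 <= (x^T *m A *m x) ord0 ord0.

Definition loewner_le (p : nat) (A B : 'M[R]_p) : Prop := psd (B - A).

(* Delta_{I, eps'} : weights indexed by I (values outside I are irrelevant) *)
Definition Delta_I (N : nat) (I : {set 'I_N}) (e' : R) (w : 'I_N -> R) : Prop :=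
  \sum_(n in I) w n = 1 /\
  forall n, n \in I -> 0 <= w n /\ w n <= 1 / ((1 - e') * #|I|%:R).

Definition Delta_N (N : nat) (e : R) (w : 'I_N -> R) : Prop :=
  Delta_I [set: 'I_N] e w.

Definition Smat (N p : nat) (g : 'I_N -> 'cV[R]_p) (w : 'I_N -> R)
    (muhat : 'cV[R]_p) : 'M[R]_p :=
  \sum_(n < N) w n *: ((g n - muhat) *m (g n - muhat)^T).

Definition gamma (N p : nat) (g : 'I_N -> 'cV[R]_p) (w : 'I_N -> R)
    (muhat : 'cV[R]_p) : R := opnorm (Smat g w muhat).

(* OPT(muhat) = min_{w in Delta_{N,eps}} max_{rho psd, Tr rho = 1} Tr(S(w;muhat) rho)
   (written with inf/sup; both extrema are attained) *)
Definition OPT (N p : nat) (e : R) (g : 'I_N -> 'cV[R]_p) (muhat : 'cV[R]_p) : R :=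
  inf [set sup [set \tr (Smat g w muhat *m rho) |
                rho in [set rho : 'M[R]_p | psd rho /\ \tr rho = 1]]
      | w in [set w | Delta_N e w]].

Definition stability (N p : nat) (e : R) (g : 'I_N -> 'cV[R]_p)
    (mu : 'cV[R]_p) (Sigma : 'M[R]_p) (dmu dSig : R) : Prop :=
  exists Iin : {set 'I_N},
    (#|~: Iin|%:R <= e * N%:R) /\
    forall w : 'I_N -> R, Delta_I Iin (e / (1 - e)) w ->
      norm2 (\sum_(n in Iin) w n *: (g n - mu)) <= dmu /\
      loewner_le (\sum_(n in Iin) w n *: ((g n - mu) *m (g n - mu)^T))
                 (Sigma + dSig%:M).

Definition nu (N p : nat) (g : 'I_N -> 'cV[R]_p) : R :=
  \big[Num.max/0]_(i < N) \big[Num.max/0]_(j < N) norm2 (g i - g j) ^+ 2.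

Definition in_hull (N p : nat) (g : 'I_N -> 'cV[R]_p) (x : 'cV[R]_p) : Prop :=
  exists c : 'I_N -> R, (forall n, 0 <= c n) /\ \sum_(n < N) c n = 1 /\
    x = \sum_(n < N) c n *: g n.

End Defs.

(* Main.v *)
Require Import Defs.
From HB Require Import structures.
From mathcomp Require Import all_boot all_order all_algebra.
From mathcomp Require Import all_classical all_reals all_analysis.
From mathcomp Require Import ring lra zify.
Import Order.TTheory GRing.Theory Num.Theory.
Local Open Scope classical_set_scope.
Local Open Scope ring_scope.
Set Implicit Arguments. Unset Strict Implicit. Unset Printing Implicit Defensive.
Section Helpers.
Variable R : realType.

Definition dot (p : nat) (u x : 'cV[R]_p) : R := \sum_(i < p) u i ord0 * x i ord0.

Lemma dotE p (u x : 'cV[R]_p) : (u^T *m x) ord0 ord0 = dot u x.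
Proof. rewrite mxE; apply: eq_bigr => i _; by rewrite mxE. Qed.

Lemma dotC p (u x : 'cV[R]_p) : dot u x = dot x u.
Proof. apply: eq_bigr => i _; by rewrite mulrC. Qed.

Lemma dotDr p (u x y : 'cV[R]_p) : dot u (x + y) = dot u x + dot u y.
Proof. rewrite /dot -big_split; apply: eq_bigr => i _; by rewrite mxE mulrDr. Qed.

Lemma dotZr p (u x : 'cV[R]_p) a : dot u (a *: x) = a * dot u x.
Proof. rewrite /dot mulr_sumr; apply: eq_bigr => i _; rewrite mxE; ring. Qed.

Lemma dotNr p (u x : 'cV[R]_p) : dot u (- x) = - dot u x.
Proof. rewrite /dot -sumrN; apply: eq_bigr => i _; rewrite mxE; ring. Qed.

Lemma dotBr p (u x y : 'cV[R]_p) : dot u (x - y) = dot u x - dot u y.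
Proof. by rewrite dotDr dotNr. Qed.

Lemma dot0r p (u : 'cV[R]_p) : dot u 0 = 0.
Proof. rewrite /dot big1 // => i _; by rewrite mxE mulr0. Qed.

Lemma dot_sumr p (u : 'cV[R]_p) (I : Type) (r : seq I) (P : pred I) (F : I -> 'cV[R]_p) :
  dot u (\sum_(i <- r | P i) F i) = \sum_(i <- r | P i) dot u (F i).
Proof. by apply: (big_morph (dot u) (dotDr u) (dot0r u)). Qed.

Lemma dotDl p (u x y : 'cV[R]_p) : dot (x + y) u = dot x u + dot y u.
Proof. by rewrite !(dotC _ u) dotDr. Qed.
Lemma dotZl p (u x : 'cV[R]_p) a : dot (a *: x) u = a * dot x u.
Proof. by rewrite !(dotC _ u) dotZr. Qed.
Lemma dotBl p (u x y : 'cV[R]_p) : dot (x - y) u = dot x u - dot y u.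
Proof. by rewrite !(dotC _ u) dotBr. Qed.

Lemma dot_ge0 p (x : 'cV[R]_p) : 0 <= dot x x.
Proof. apply: sumr_ge0 => i _; exact: mulr_ge0_le0 || by rewrite -expr2 sqr_ge0. Qed.

Lemma norm2E p (x : 'cV[R]_p) : norm2 x = Num.sqrt (dot x x).
Proof. rewrite /norm2 /dot; congr Num.sqrt; apply: eq_bigr => i _; by rewrite expr2. Qed.

Lemma norm2_ge0 p (x : 'cV[R]_p) : 0 <= norm2 x.
Proof. by rewrite norm2E sqrtr_ge0. Qed.

Lemma norm2_sq p (x : 'cV[R]_p) : norm2 x ^+ 2 = dot x x.
Proof. by rewrite norm2E sqr_sqrtr // dot_ge0. Qed.

Lemma norm2Z p (x : 'cV[R]_p) a : norm2 (a *: x) = `|a| * norm2 x.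
Proof.
rewrite !norm2E dotZl dotZr mulrA -expr2 sqrtrM ?sqr_ge0 //.
by rewrite sqrtr_sqr.
Qed.

Lemma disc (A B C : R) : 0 <= A -> (forall t, 0 <= t ^+ 2 * A - 2 * t * C + B) ->
  C ^+ 2 <= A * B.
Proof.
rewrite le0r => /orP [/eqP A0 | Apos] H.
  have [C0|Cn0] := eqVneq C 0.
    by rewrite C0 A0; lra.
  have := H ((B + 1) / (2 * C)).
  have -> : ((B + 1) / (2 * C)) ^+ 2 * A - 2 * ((B + 1) / (2 * C)) * C + B = -1.
    by rewrite A0; field; rewrite Cn0.
  lra.
have := H (C / A).
have -> : (C / A) ^+ 2 * A - 2 * (C / A) * C + B = B - C ^+ 2 / A.
  by field; rewrite gt_eqF.
rewrite subr_ge0 ler_pdivrMr // => h; by rewrite mulrC.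
Qed.

Lemma wCS (I : finType) (P : pred I) (w a b : I -> R) :
  (forall i, P i -> 0 <= w i) ->
  (\sum_(i | P i) w i * a i * b i) ^+ 2 <=
  (\sum_(i | P i) w i * a i ^+ 2) * (\sum_(i | P i) w i * b i ^+ 2).
Proof.
move=> w0; apply: disc.
  by apply: sumr_ge0 => i Pi; rewrite mulr_ge0 ?w0 ?sqr_ge0.
move=> t.
have -> : t ^+ 2 * (\sum_(i | P i) w i * a i ^+ 2) - 2 * t * (\sum_(i | P i) w i * a i * b i)
   + \sum_(i | P i) w i * b i ^+ 2 = \sum_(i | P i) w i * (t * a i - b i) ^+ 2.
  rewrite !mulr_sumr -sumrB -big_split /=; apply: eq_bigr => i _; ring.
by apply: sumr_ge0 => i Pi; rewrite mulr_ge0 ?w0 ?sqr_ge0.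
Qed.

Lemma dotCS p (u x : 'cV[R]_p) : dot u x ^+ 2 <= dot u u * dot x x.
Proof.
have := @wCS _ predT (fun _ => 1) (fun i => u i ord0) (fun i => x i ord0) (fun _ _ => ler01).
rewrite /dot.
have e1 : forall (f g : 'I_p -> R), \sum_(i < p) f i * g i = \sum_(i | predT i) 1 * f i * g i.
  by move=> f g; apply: eq_bigr => i _; rewrite mul1r.
rewrite (e1 (fun i => u i ord0)) (e1 (fun i => u i ord0)) (e1 (fun i => x i ord0)).
congr (_ <= _ * _); apply: eq_bigr => i _; by rewrite expr2 mulrA.
Qed.

Lemma sq_le (a b : R) : 0 <= b -> a ^+ 2 <= b ^+ 2 -> a <= b.
Proof. move=> b0 h; nra. Qed.

Lemma dot_le p (u x : 'cV[R]_p) : dot u x <= norm2 u * norm2 x.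
Proof.
apply: sq_le; first by rewrite mulr_ge0 ?norm2_ge0.
by rewrite exprMn !norm2_sq dotCS.
Qed.

End Helpers.

Section Helpers2.
Variable R : realType.

Lemma CS0 p (f g : 'I_p -> R) :
  (\sum_i f i * g i) ^+ 2 <= (\sum_i f i ^+ 2) * (\sum_i g i ^+ 2).
Proof.
have := @wCS R _ predT (fun _ => 1) f g (fun _ _ => ler01).
have e1 : forall (h : 'I_p -> R), \sum_(i < p) h i = \sum_(i | predT i) h i by [].
rewrite (e1 (fun i => f i * g i)) (e1 (fun i => f i ^+ 2)) (e1 (fun i => g i ^+ 2)).
congr (_ <= _); [congr (_ ^+ 2) | congr (_ * _)]; apply: eq_bigr => i _; by rewrite mul1r.
Qed.

Definition frob p (A : 'M[R]_p) : R := \sum_i \sum_j A i j ^+ 2.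

Lemma frob_ge0 p (A : 'M[R]_p) : 0 <= frob A.
Proof. by apply: sumr_ge0 => i _; apply: sumr_ge0 => j _; rewrite sqr_ge0. Qed.

Lemma normA_sq p (A : 'M[R]_p) x : dot (A *m x) (A *m x) <= frob A * dot x x.
Proof.
rewrite {1}/dot /frob mulr_suml; apply: ler_sum => i _.
rewrite -expr2 mxE.
have -> : dot x x = \sum_j x j ord0 ^+ 2 by apply: eq_bigr => j _; rewrite expr2.
exact: CS0.
Qed.

Lemma opnorm_ub p (A : 'M[R]_p) :
  has_ubound [set norm2 (A *m x) | x in [set x : 'cV[R]_p | norm2 x <= 1]].
Proof.
exists (Num.sqrt (frob A)) => _ [x hx <-].
rewrite norm2E; apply: ler_wsqrtr; apply: le_trans (normA_sq A x) _.
have h0 := norm2_ge0 x; have h1 := norm2_sq x; have hf := frob_ge0 A.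
move: hx; rewrite /= => hx.
have hs : dot x x <= 1 by rewrite -h1 expr2; nra.
rewrite -[X in _ <= X]mulr1; exact: ler_wpM2l.
Qed.

Lemma opnorm_le p (A : 'M[R]_p) x : norm2 (A *m x) <= opnorm A * norm2 x.
Proof.
have := norm2_ge0 x; rewrite le0r => /orP [/eqP hz | hpos].
  rewrite hz mulr0; apply: sq_le => //.
  rewrite norm2_sq; apply: le_trans (normA_sq A x) _.
  by rewrite -norm2_sq hz; lra.
have : norm2 (A *m ((norm2 x)^-1 *: x)) <= opnorm A.
  rewrite /opnorm; apply: (ub_le_sup (opnorm_ub A)).
  exists ((norm2 x)^-1 *: x) => //=.
  by rewrite norm2Z ger0_norm ?invr_ge0 ?norm2_ge0 // mulVf ?gt_eqF.
rewrite -scalemxAr norm2Z ger0_norm ?invr_ge0 ?norm2_ge0 // mulrC.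
by rewrite ler_pdivrMr.
Qed.

Lemma opnorm_ge0 p (A : 'M[R]_p) (x : 'cV[R]_p) : norm2 x <= 1 -> 0 <= opnorm A.
Proof.
move=> hx; apply: le_trans (norm2_ge0 (A *m x)) _.
rewrite /opnorm; apply: (ub_le_sup (opnorm_ub A)); by exists x.
Qed.

Lemma qf_opnorm p (A : 'M[R]_p) u : dot u (A *m u) <= opnorm A * dot u u.
Proof.
apply: le_trans (dot_le _ _) _.
rewrite -norm2_sq expr2 mulrA [opnorm A * _]mulrC -mulrA.
apply: ler_wpM2l; first exact: norm2_ge0.
exact: opnorm_le.
Qed.

Lemma rank1_mul p (x u : 'cV[R]_p) : (x *m x^T) *m u = dot x u *: x.
Proof. by rewrite -mulmxA (mx11_scalar (x^T *m u)) dotE mul_mx_scalar. Qed.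

Lemma wsum_qf p (I : finType) (P : pred I) (w : I -> R) (x : I -> 'cV[R]_p) u :
  dot u ((\sum_(n | P n) w n *: (x n *m (x n)^T)) *m u) =
  \sum_(n | P n) w n * dot u (x n) ^+ 2.
Proof.
rewrite mulmx_suml dot_sumr; apply: eq_bigr => n _.
by rewrite -scalemxAl rank1_mul !dotZr dotC expr2 mulrA.
Qed.

Lemma scalar_qf p (a : R) (u : 'cV[R]_p) : dot u (a%:M *m u) = a * dot u u.
Proof. by rewrite mul_scalar_mx dotZr. Qed.

Lemma tr_rank1 p (S : 'M[R]_p) u : \tr (S *m (u *m u^T)) = dot u (S *m u).
Proof. by rewrite mulmxA mxtrace_mulC trace_mx11 dotE. Qed.

Lemma tr_decomp p (S : 'M[R]_p) (s : seq 'cV[R]_p) :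
  \tr (S *m \sum_(u <- s) u *m u^T) = \sum_(u <- s) dot u (S *m u).
Proof.
rewrite mulmx_sumr (big_morph (@mxtrace R p) (@mxtraceD R p) (mxtrace0 R p)).
by apply: eq_bigr => u _; rewrite tr_rank1.
Qed.

Lemma bf_sym p (B : 'M[R]_p) x y : B^T = B -> dot y (B *m x) = dot x (B *m y).
Proof.
move=> Bs; rewrite -!dotE.
have -> : y^T *m (B *m x) = (x^T *m (B *m y))^T by rewrite !trmx_mul trmxK Bs mulmxA.
by rewrite mxE.
Qed.

Lemma qf_add p (B : 'M[R]_p) x y : B^T = B ->
  dot (x + y) (B *m (x + y)) = dot x (B *m x) + 2 * dot x (B *m y) + dot y (B *m y).
Proof.
move=> Bs; rewrite mulmxDr !dotDl !dotDr (bf_sym y x Bs); ring.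
Qed.

Lemma qf_scale p (B : 'M[R]_p) x a : dot (a *: x) (B *m (a *: x)) = a ^+ 2 * dot x (B *m x).
Proof. rewrite -scalemxAr dotZl dotZr; ring. Qed.

Lemma dot_e p (x : 'cV[R]_p) k : dot x (delta_mx k ord0) = x k ord0.
Proof.
rewrite /dot (bigD1 k) //= big1 => [|i ik]; rewrite mxE.
  by rewrite !eqxx mulr1 addr0.
by rewrite (negbTE ik) mulr0.
Qed.

Lemma Be_entry p (B : 'M[R]_p) k i : (B *m (delta_mx k (ord0 : 'I_1) : 'cV[R]_p)) i ord0 = B i k.
Proof. by rewrite -colE mxE. Qed.

Lemma dot_eBe p (B : 'M[R]_p) k j : dot (delta_mx k ord0 : 'cV[R]_p) (B *m delta_mx j ord0) = B k j.
Proof. by rewrite dotC dot_e Be_entry. Qed.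

End Helpers2.

Section Helpers3.
Variable R : realType.

Lemma psd_qf p (B : 'M[R]_p) : psd B -> forall x, 0 <= dot x (B *m x).
Proof. move=> [_ Bq] x; rewrite -dotE mulmxA; exact: Bq. Qed.

Lemma psd_decomp_aux p m : forall B : 'M[R]_p, psd B ->
  (forall i j : 'I_p, (i < p - m)%N -> B i j = 0) ->
  exists s : seq 'cV[R]_p, B = \sum_(u <- s) u *m u^T.
Proof.
elim: m => [|m IH] B hB Bz.
  exists [::]; rewrite big_nil; apply/matrixP => i j; rewrite mxE; apply: Bz.
  by rewrite subn0.
have Bq' := psd_qf hB; have [Bs _] := hB.
have Bsym : forall i j, B i j = B j i by move=> i j; rewrite -{1}Bs mxE.
case: (leqP p m) => hpm.
  apply: IH => // i j hi; exfalso; move: hi; lia.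
have hk : (p - m.+1 < p)%N by lia.
pose k := Ordinal hk.
pose e := (delta_mx k ord0 : 'cV[R]_p).
have d0 : 0 <= B k k by rewrite -(dot_eBe B k k); exact: Bq'.
move: d0; rewrite le0r => /orP [/eqP dz | dpos].
  have rowk : forall j, B k j = 0.
    move=> j.
    have h : forall t, 0 <= t ^+ 2 * 0 - 2 * t * (- B k j) + B j j.
      move=> t; have := Bq' (t *: e + delta_mx j ord0).
      rewrite qf_add // qf_scale dotZl !dot_eBe dz; lra.
    have := disc (le_refl 0) h; rewrite mul0r sqrrN => h2.
    have : B k j ^+ 2 = 0 by apply/eqP; rewrite eq_le h2 sqr_ge0.
    by move/eqP; rewrite sqrf_eq0 => /eqP.
  apply: IH => // i j hi.
  case: (ltnP i (p - m.+1)) => hi2; first exact: Bz.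
  have -> : i = k by apply: ord_inj => /=; lia.
  exact: rowk.
pose c := B *m e.
have cE : forall i, c i ord0 = B i k by move=> i; exact: Be_entry.
pose B' := B - (B k k)^-1 *: (c *m c^T).
have B'E : forall i j, B' i j = B i j - (B k k)^-1 * (B i k * B j k).
  move=> i j; rewrite /B' !mxE big_ord1.
  by rewrite [c^T _ _]mxE !cE.
have hB' : psd B'.
  split.
    by rewrite /B' linearB /= linearZ /= trmx_mul trmxK Bs.
  move=> x; rewrite -mulmxA dotE mulmxBl -scalemxAl rank1_mul dotBr !dotZr.
  have := Bq' (x + (- (dot x c / B k k)) *: e).
  rewrite qf_add // qf_scale -scalemxAr dotZr dot_eBe -/c (dotC c x).
  have -> : dot x (B *m x) + 2 * (- (dot x c / B k k) * dot x c) +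
     (- (dot x c / B k k)) ^+ 2 * B k k =
     dot x (B *m x) - (B k k)^-1 * (dot x c * dot x c).
    by field; rewrite gt_eqF.
  done.
have hz' : forall i j : 'I_p, (i < p - m)%N -> B' i j = 0.
  move=> i j hi; rewrite B'E.
  case: (ltnP i (p - m.+1)) => hi2.
    by rewrite (Bz i j hi2) (Bz i k hi2); ring.
  have -> : i = k by apply: ord_inj => /=; lia.
  rewrite (Bsym j k) mulrA mulVf ?gt_eqF // mul1r; ring.
have [s hs] := IH B' hB' hz'.
exists (((Num.sqrt (B k k))^-1 *: c) :: s); rewrite big_cons -hs.
rewrite linearZ /= -scalemxAl -scalemxAr scalerA -invrM ?unitfE ?gt_eqF ?sqrtr_gt0 //.
rewrite -expr2 sqr_sqrtr ?ltW //.
by rewrite /B' addrC subrK.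
Qed.

Lemma psd_decomp p (B : 'M[R]_p) : psd B ->
  exists s : seq 'cV[R]_p, B = \sum_(u <- s) u *m u^T.
Proof. move=> hB; apply: (@psd_decomp_aux p p) => // i j; by rewrite subnn. Qed.

Lemma tr_psd_le p (S rho : 'M[R]_p) lam : psd rho -> \tr rho = 1 ->
  (forall u, dot u (S *m u) <= lam * dot u u) -> \tr (S *m rho) <= lam.
Proof.
move=> hr; have [s ->] := psd_decomp hr => htr hS.
have : \sum_(u <- s) dot u u = 1.
  rewrite -htr -[X in _ = \tr X]mul1mx tr_decomp.
  by apply: eq_bigr => u _; rewrite mul1mx.
move=> h1; rewrite tr_decomp -[lam]mulr1 -h1 mulr_sumr.
by apply: ler_sum => u _; exact: hS.
Qed.

Lemma tr_psd_ge0 p (S rho : 'M[R]_p) : psd rho ->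
  (forall u, 0 <= dot u (S *m u)) -> 0 <= \tr (S *m rho).
Proof.
move=> hr; have [s ->] := psd_decomp hr => hS.
by rewrite tr_decomp; apply: sumr_ge0 => u _; exact: hS.
Qed.

End Helpers3.

Section Core.
Variable R : realType.

Lemma sum_split (N : nat) (I : {set 'I_N}) (F : 'I_N -> R) :
  \sum_(n < N) F n = \sum_(n in I) F n + \sum_(n in ~: I) F n.
Proof.
rewrite (bigID (fun n => n \in I)) /=; congr (_ + _); apply: eq_bigl => n //.
by rewrite !inE.
Qed.

Lemma core N p (G : 'I_N -> 'cV[R]_p) (m0 c : 'cV[R]_p) (w : 'I_N -> R)
    (I : {set 'I_N}) (dm gam e Wi : R) :
  (forall n, 0 <= w n) -> \sum_(n < N) w n = 1 ->
  Wi = \sum_(n in I) w n -> 0 < Wi ->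
  (1 - Wi) * (1 - e) <= e -> 0 <= e -> 0 < 1 - 2 * e -> 0 <= dm ->
  (forall v, \sum_(n in I) (w n / Wi) * dot v (G n - m0) <= norm2 v * dm) ->
  (forall v, \sum_(n < N) w n * dot v (G n - c) ^+ 2 <= gam * dot v v) ->
  norm2 (\sum_(n < N) w n *: G n - m0) <= dm + Num.sqrt (e / (1 - 2 * e)) * Num.sqrt gam.
Proof.
move=> w0 hsum hWi Wipos hWo e0 e2 dm0 hin hq.
set mw := \sum_(n < N) w n *: G n.
set d := mw - m0.
set D := norm2 d.
have hD0 : 0 <= D := norm2_ge0 d.
case: (boolP (D <= dm)) => [hDdm|]; last rewrite -ltNge => hDdm.
  apply: le_trans hDdm _; rewrite lerDl; apply: mulr_ge0; exact: sqrtr_ge0.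
set D2 := dot d d.
have hD2 : D ^+ 2 = D2 := norm2_sq d.
have Dpos : 0 < D by apply: le_lt_trans dm0 hDdm.
pose a n := dot d (G n - mw).
have hmw : dot d mw = \sum_(n < N) w n * dot d (G n).
  by rewrite dot_sumr; apply: eq_bigr => n _; rewrite dotZr.
have Sa : \sum_(n < N) w n * a n = 0.
  rewrite /a.
  have -> : \sum_(n < N) w n * dot d (G n - mw) =
            \sum_(n < N) w n * dot d (G n) - (\sum_(n < N) w n) * dot d mw.
    rewrite mulr_suml -sumrB; apply: eq_bigr => n _; rewrite dotBr; ring.
  by rewrite hsum mul1r hmw subrr.
have key : forall n, dot d (G n - m0) = a n + D2.
  move=> n; rewrite /a /D2 -dotDr; congr dot.
  by rewrite /d addrA subrK.
pose Ai := \sum_(n in I) w n * a n.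
pose Ao := \sum_(n in ~: I) w n * a n.
have AiAo : Ai + Ao = 0 by rewrite /Ai /Ao -sum_split.
have hAi : Ai + Wi * D2 <= Wi * (D * dm).
  have := hin d; rewrite -/D.
  have -> : \sum_(n in I) w n / Wi * dot d (G n - m0) = Wi^-1 * (Ai + Wi * D2).
    rewrite /Ai hWi mulr_suml -big_split mulr_sumr /=.
    apply: eq_bigr => n _; rewrite key; ring.
  move=> h; have := ler_wpM2l (ltW Wipos) h; rewrite [Wi * (Wi^-1 * _)]mulrA mulfV ?gt_eqF // mul1r; apply.
pose b := dot d (mw - c).
have hq2 : \sum_(n < N) w n * a n ^+ 2 + b ^+ 2 <= gam * D2.
  have := hq d; rewrite -/D2.
  have -> : \sum_(n < N) w n * dot d (G n - c) ^+ 2 =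
     \sum_(n < N) w n * a n ^+ 2 + 2 * b * (\sum_(n < N) w n * a n)
       + b ^+ 2 * (\sum_(n < N) w n).
    rewrite [2 * b * _]mulr_sumr [b ^+ 2 * _]mulr_sumr -!big_split /=; apply: eq_bigr => n _.
    have -> : dot d (G n - c) = a n + b by rewrite /a /b -dotDr addrA subrK.
    ring.
  by rewrite Sa hsum mulr0 addr0 mulr1.
pose X := \sum_(n in I) w n * a n ^+ 2.
pose Y := \sum_(n in ~: I) w n * a n ^+ 2.
have XY : \sum_(n < N) w n * a n ^+ 2 = X + Y by rewrite /X /Y -sum_split.
have X0 : 0 <= X by apply: sumr_ge0 => n _; rewrite mulr_ge0 ?sqr_ge0.
have Y0 : 0 <= Y by apply: sumr_ge0 => n _; rewrite mulr_ge0 ?sqr_ge0.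
have hXY : X + Y <= gam * D2 by rewrite -XY; move: hq2; have := sqr_ge0 b; lra.
have WoE : \sum_(n in ~: I) w n = 1 - Wi.
  by rewrite hWi -hsum (sum_split I) addrC addKr.
have CSi : Ai ^+ 2 <= Wi * X.
  have := @wCS R _ (fun n => n \in I) w (fun _ => 1) a (fun n _ => w0 n).
  have -> : \sum_(i in I) w i * 1 * a i = Ai by apply: eq_bigr => n _; rewrite mulr1.
  have -> : \sum_(i in I) w i * 1 ^+ 2 = Wi by rewrite hWi; apply: eq_bigr => n _; rewrite expr1n mulr1.
  done.
have CSo : Ao ^+ 2 <= (1 - Wi) * Y.
  have := @wCS R _ (fun n => n \in ~: I) w (fun _ => 1) a (fun n _ => w0 n).
  have -> : \sum_(i in ~: I) w i * 1 * a i = Ao by apply: eq_bigr => n _; rewrite mulr1.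
  have -> : \sum_(i in ~: I) w i * 1 ^+ 2 = 1 - Wi by rewrite -WoE; apply: eq_bigr => n _; rewrite expr1n mulr1.
  done.
have Wo0 : 0 <= 1 - Wi by rewrite -WoE; apply: sumr_ge0 => n _.
have hAo2 : Ao ^+ 2 <= Wi * (1 - Wi) * (gam * D2).
  have e1 : Ai ^+ 2 = Ao ^+ 2 by rewrite (_ : Ai = - Ao) ?sqrrN //; lra.
  have t1 : Wi * Ao ^+ 2 <= Wi * ((1 - Wi) * Y) by apply: ler_wpM2l; [exact: ltW|].
  have t2 : (1 - Wi) * Ao ^+ 2 <= (1 - Wi) * (Wi * X) by apply: ler_wpM2l; rewrite // -e1.
  have t3 : Wi * (1 - Wi) * (X + Y) <= Wi * (1 - Wi) * (gam * D2).
    by apply: ler_wpM2l; rewrite // mulr_ge0 // ltW.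
  have -> : Ao ^+ 2 = Wi * Ao ^+ 2 + (1 - Wi) * Ao ^+ 2 by ring.
  apply: le_trans t3; have -> : Wi * (1 - Wi) * (X + Y) = Wi * ((1 - Wi) * Y) + (1 - Wi) * (Wi * X) by ring.
  exact: lerD.
have lowAo : Wi * D * (D - dm) <= Ao.
  have -> : Ao = - Ai by lra.
  have -> : Wi * D * (D - dm) = Wi * D2 - Wi * (D * dm) by rewrite -hD2; ring.
  lra.
have lo0 : 0 <= Wi * D * (D - dm).
  apply: mulr_ge0; first by apply: mulr_ge0; apply: ltW.
  rewrite subr_ge0; exact: ltW.
have h2 : (Wi * D * (D - dm)) ^+ 2 <= Wi * (1 - Wi) * (gam * D2).
  apply: le_trans hAo2; rewrite !expr2; exact: ler_pM.
have WD2 : 0 < Wi * D2 by rewrite -hD2 mulr_gt0 // exprn_gt0.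
have h3 : Wi * (D - dm) ^+ 2 <= (1 - Wi) * gam.
  rewrite -(ler_pM2l WD2).
  have E1 : (Wi * D * (D - dm)) ^+ 2 = Wi * D2 * (Wi * (D - dm) ^+ 2) by rewrite -hD2; ring.
  have E2 : Wi * (1 - Wi) * (gam * D2) = Wi * D2 * ((1 - Wi) * gam) by ring.
  by rewrite -E1 -E2.
have gam0 : 0 <= gam.
  have : 0 <= gam * D2 by lra.
  by rewrite pmulr_lge0 // -hD2 exprn_gt0.
set Z := (D - dm) ^+ 2.
have h4 : (1 - 2 * e) * Z <= e * gam.
  rewrite -(ler_pM2l Wipos).
  have t1 : ((1 - Wi) * (1 - e) - e) * gam <= 0 by apply: mulr_le0_ge0 => //; lra.
  have t2 : (1 - 2 * e) * (Wi * Z) <= (1 - 2 * e) * ((1 - Wi) * gam) by apply: ler_wpM2l; rewrite // ltW.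
  have E : Wi * ((1 - 2 * e) * Z) = (1 - 2 * e) * (Wi * Z) by ring.
  rewrite E; apply: le_trans t2 _.
  have E2 : Wi * (e * gam) = (1 - 2 * e) * ((1 - Wi) * gam) - ((1 - Wi) * (1 - e) - e) * gam by ring.
  rewrite E2; lra.
have h5 : Z <= e / (1 - 2 * e) * gam.
  by rewrite mulrAC ler_pdivlMr // mulrC.
have fin : D - dm <= Num.sqrt (e / (1 - 2 * e) * gam).
  apply: sq_le; first exact: sqrtr_ge0.
  by rewrite sqr_sqrtr // mulr_ge0 // divr_ge0 // ltW.
rewrite -sqrtrM; first lra.
by apply: divr_ge0 => //; apply: ltW.
Qed.

End Core.

Section Sup.
Variable R : realType.

Lemma dot_abs p (u x : 'cV[R]_p) : `|dot u x| <= norm2 u * norm2 x.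
Proof.
rewrite ler_norml dot_le andbT.
have := dot_le u (- x); rewrite dotNr.
have -> : norm2 (- x) = norm2 x by rewrite -scaleN1r norm2Z normrN normr1 mul1r.
lra.
Qed.

Lemma norm2N p (x : 'cV[R]_p) : norm2 (- x) = norm2 x.
Proof. by rewrite -scaleN1r norm2Z normrN normr1 mul1r. Qed.

Lemma rho_exists p : (0 < p)%N ->
  exists rho : 'M[R]_p, psd rho /\ \tr rho = 1.
Proof.
move=> pp; pose e := (delta_mx (Ordinal pp) (ord0 : 'I_1) : 'cV[R]_p).
exists (e *m e^T); split; first split.
- by rewrite trmx_mul trmxK.
- move=> x; rewrite -mulmxA dotE rank1_mul dotZr (dotC e x) -expr2; exact: sqr_ge0.
- rewrite -[e *m e^T]mul1mx tr_rank1 mul1mx dot_e /e mxE !eqxx //.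
Qed.

Lemma sup_tr_ge0 p (S : 'M[R]_p) : (0 < p)%N ->
  (forall u, 0 <= dot u (S *m u)) ->
  0 <= sup [set \tr (S *m rho) | rho in [set rho : 'M[R]_p | psd rho /\ \tr rho = 1]].
Proof.
move=> pp hS; have [rho [h1 h2]] := rho_exists pp.
apply: le_trans (tr_psd_ge0 h1 hS) _.
apply: (ub_le_sup); last by exists rho.
exists (opnorm S) => _ [r [hr1 hr2] <-].
apply: tr_psd_le => // u; exact: qf_opnorm.
Qed.

Lemma sup_tr_le p (S : 'M[R]_p) lam : (0 < p)%N ->
  (forall u, dot u (S *m u) <= lam * dot u u) ->
  sup [set \tr (S *m rho) | rho in [set rho : 'M[R]_p | psd rho /\ \tr rho = 1]] <= lam.
Proof.
move=> pp hS; have [rho [h1 h2]] := rho_exists pp.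
apply: ge_sup; first by exists (\tr (S *m rho)); exists rho.
move=> _ [r [hr1 hr2] <-]; exact: tr_psd_le.
Qed.

Lemma Smat_qf N p (g : 'I_N -> 'cV[R]_p) w c u :
  dot u (Smat g w c *m u) = \sum_(n < N) w n * dot u (g n - c) ^+ 2.
Proof.
rewrite /Smat mulmx_suml dot_sumr; apply: eq_bigr => n _.
by rewrite -scalemxAl rank1_mul !dotZr dotC expr2 mulrA.
Qed.

End Sup.

Unset Implicit Arguments. Set Strict Implicit.
Theorem mainTheorem14 (R : realType) (p N : nat) (eps zeta : R)
    (Theta B0 : set 'cV[R]_p) (c0 : 'cV[R]_p) (r0 : R)
    (g : 'cV[R]_p -> 'I_N -> 'cV[R]_p)
    (mu : 'cV[R]_p -> 'cV[R]_p) (Sigma : 'cV[R]_p -> 'M[R]_p)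
    (dmu dSig : R -> R) (theta : 'cV[R]_p)
    (what : 'I_N -> R) (muhat : 'cV[R]_p) (T : nat) (Cstop Rk dT Ck : R) :
  0 <= eps -> eps < 1 / 3 -> 0 < zeta < 1 ->
  0 < r0 -> B0 = [set x | norm2 (x - c0) <= r0] -> B0 `<=` Theta ->
  (forall t, psd (Sigma t)) ->
  B0 theta ->
  (* the event: inlier stability for the cloud at theta *)
  stability eps (g theta) (mu theta) (Sigma theta) (dmu zeta) (dSig zeta) ->
  (* output of the outer loop at a terminating iteration *)
  in_hull (g theta) muhat ->
  Delta_N eps what ->
  ( (* (a) stopping threshold certificate *)
    (gamma (g theta) what muhat <= Cstop /\ Ck = Cstop)
    \/
    (* (b) MW-MMW certificate *)
    (gamma (g theta) what muhat <= OPT eps (g theta) muhat + dT /\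
     norm2 (muhat - mu theta) <= Rk /\
     (0 < T)%N /\
     dT <= 4 * nu (g theta) *
             (Num.sqrt (ln p%:R / T%:R) + Num.sqrt (ln (1 / (1 - eps)) / T%:R)) /\
     has_ubound [set opnorm (Sigma t) | t in B0] /\
     Ck = sup [set opnorm (Sigma t) | t in B0] + dSig zeta
          + (dmu zeta + Rk) ^+ 2 + dT) ) ->
  norm2 (\sum_(n < N) what n *: g theta n - mu theta)
    <= dmu zeta + Num.sqrt (eps / (1 - 2 * eps)) * Num.sqrt Ck.
Proof.
move=> e0 e3 _ _ _ _ _ Btheta hstab _ hDelta hcase.
set G := g theta; set m0 := mu theta; set dm := dmu zeta; set dS := dSig zeta.
have [Iin [hcard hst]] := hstab.
have [hsum hw] := hDelta.
have cardT : #|[set: 'I_N]%SET| = N by rewrite cardsT card_ord.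
rewrite cardT in hw.
have hw' : forall n, 0 <= what n /\ what n <= 1 / ((1 - eps) * N%:R).
  by move=> n; apply: hw; rewrite inE.
have hsum' : \sum_(n < N) what n = 1.
  by rewrite -hsum; apply: eq_bigl => n; rewrite inE.
have Npos : (0 < N)%N.
  case: (posnP N) => [N0|//]; exfalso; move: hsum'.
  rewrite big1 => [|n _]; first by move/eqP; rewrite eq_sym oner_eq0.
  exfalso; have := ltn_ord n; move: (nat_of_ord n) => j; by rewrite N0.
have Nrpos : 0 < N%:R :> R by rewrite ltr0n.
have hNk : #|Iin|%:R + #|~: Iin|%:R = N%:R :> R by rewrite -natrD cardsC card_ord.
have eps1 : 0 < 1 - eps by lra.
have eps2 : 0 < 1 - 2 * eps by lra.
have hc : 1 / ((1 - eps) * N%:R) * (1 - eps) = (N%:R)^-1.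
  by field; rewrite !gt_eqF.
set Wi := \sum_(n in Iin) what n.
set Wo := \sum_(n in ~: Iin) what n.
have WiWo : Wi + Wo = 1 by rewrite /Wi /Wo -sum_split.
have hWo : Wo <= #|~: Iin|%:R * (1 / ((1 - eps) * N%:R)).
  apply: le_trans (ler_sum _ (fun n _ => (hw' n).2)) _.
  by rewrite sumr_const mulr_natl.
have F1 : (1 - Wi) * (1 - eps) <= eps.
  have -> : 1 - Wi = Wo by lra.
  apply: le_trans (ler_wpM2r (ltW eps1) hWo) _.
  by rewrite -mulrA hc ler_pdivrMr.
have Wipos : 0 < Wi by nra.
have nipos : 0 < #|Iin|%:R :> R by nra.
pose w' n := what n / Wi.
have hD' : Delta_I Iin (eps / (1 - eps)) w'.
  split.
    by rewrite /w' -mulr_suml -/Wi mulfV ?gt_eqF.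
  move=> n nI; split; first by rewrite /w' divr_ge0 ?(hw' n).1 // ltW.
  have aE : 1 - eps / (1 - eps) = (1 - 2 * eps) / (1 - eps) by field; rewrite gt_eqF.
  have q0 : 0 < (1 - eps / (1 - eps)) * #|Iin|%:R by rewrite aE mulr_gt0 // divr_gt0.
  have A1 : (1 - eps / (1 - eps)) * #|Iin|%:R + #|~: Iin|%:R <= (1 - eps) * N%:R.
    rewrite -(ler_pM2l eps1).
    have -> : (1 - eps) * ((1 - eps / (1 - eps)) * #|Iin|%:R + #|~: Iin|%:R) =
       (1 - 2 * eps) * #|Iin|%:R + (1 - eps) * #|~: Iin|%:R by field; rewrite gt_eqF.
    nra.
  have hq : what n * ((1 - eps / (1 - eps)) * #|Iin|%:R) <= Wi.
    apply: le_trans (ler_wpM2r (ltW q0) (hw' n).2) _.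
    have c0' : 0 <= 1 / ((1 - eps) * N%:R) by rewrite divr_ge0 // mulr_ge0 // ltW.
    have := ler_wpM2l c0' A1.
    have -> : 1 / ((1 - eps) * N%:R) * ((1 - eps) * N%:R) = 1 by rewrite mul1r mulVf // gt_eqF // mulr_gt0.
    move=> h; have : Wi = 1 - Wo by lra.
    move=> ->; move: h hWo; rewrite mulrDr; lra.
  rewrite /w' ler_pdivrMr // mul1r ler_pdivlMl //; by rewrite mulrC.
have [hmean hloew] := hst w' hD'.
have dm0 : 0 <= dm := le_trans (norm2_ge0 _) hmean.
have hin : forall v, \sum_(n in Iin) (what n / Wi) * dot v (G n - m0) <= norm2 v * dm.
  move=> v.
  have -> : \sum_(n in Iin) (what n / Wi) * dot v (G n - m0) =
            dot v (\sum_(n in Iin) w' n *: (G n - m0)).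
    by rewrite dot_sumr; apply: eq_bigr => n _; rewrite dotZr.
  apply: le_trans (dot_le _ _) _; apply: ler_wpM2l; [exact: norm2_ge0 | exact: hmean].
set gam := gamma G what muhat.
have hq : forall v, \sum_(n < N) what n * dot v (G n - muhat) ^+ 2 <= gam * dot v v.
  by move=> v; rewrite -Smat_qf; exact: qf_opnorm.
have hcore := @core R N p G m0 muhat what Iin dm gam eps Wi
  (fun n => (hw' n).1) hsum' (erefl _) Wipos F1 e0 eps2 dm0 hin hq.
have fin : gam <= Ck -> norm2 (\sum_(n < N) what n *: G n - m0) <=
    dm + Num.sqrt (eps / (1 - 2 * eps)) * Num.sqrt Ck.
  move=> hg; apply: le_trans hcore _; rewrite lerD2l.
  by apply: ler_wpM2l; [exact: sqrtr_ge0 | exact: ler_wsqrtr].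
case: hcase => [[hga hC] | [hgO [hR [_ [_ [hub hC]]]]]].
  by apply: fin; rewrite hC.
case: (posnP p) => [p0|pp].
  have -> : norm2 (\sum_(n < N) what n *: G n - m0) = 0.
    rewrite /norm2 big1 ?sqrtr0 // => i _; exfalso; have := ltn_ord i; move: (nat_of_ord i) => j; by rewrite p0.
  by apply: addr_ge0 dm0 (mulr_ge0 (sqrtr_ge0 _) (sqrtr_ge0 _)).
apply: fin; rewrite hC.
rewrite -/dm -/dS.
move: hgO hR hub; rewrite -/G -/m0 -/gam => hgO hR hub.
set lam := sup [set opnorm (Sigma t) | t in B0] + dS + (dm + Rk) ^+ 2.
suff hOPT : OPT eps G muhat <= lam by lra.
pose w0 n := if n \in Iin then (#|Iin|%:R)^-1 else (0:R).
have w0in : \sum_(n in Iin) w0 n = 1.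
  rewrite (eq_bigr (fun _ => (#|Iin|%:R)^-1)) => [|n nI]; last by rewrite /w0 nI.
  by rewrite sumr_const -[_ *+ #|Iin|]mulr_natr mulVf ?gt_eqF.
have w0out : \sum_(n in ~: Iin) w0 n = 0.
  by apply: big1 => n; rewrite inE /w0 => /negbTE ->.
have w00 : forall n, 0 <= w0 n.
  by move=> n; rewrite /w0; case: ifP => _ //; rewrite invr_ge0 ltW.
have ni_ge : (1 - eps) * N%:R <= #|Iin|%:R by nra.
have w0D : Delta_N eps w0.
  split.
    rewrite (_ : \sum_(n in [set: 'I_N]%SET) w0 n = \sum_(n < N) w0 n); last first.
      by apply: eq_bigl => n; rewrite inE.
    by rewrite (sum_split Iin) w0in w0out addr0.
  move=> n _; rewrite cardT; split => //.
  rewrite /w0; case: ifP => _; last by rewrite divr_ge0 // mulr_ge0 // ltW.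
  by rewrite div1r lef_pV2 ?posrE ?mulr_gt0.
have a0 : 0 < 1 - eps / (1 - eps).
  rewrite (_ : 1 - eps / (1 - eps) = (1 - 2 * eps) / (1 - eps)); first exact: divr_gt0.
  by field; rewrite gt_eqF.
have a1 : 0 <= eps / (1 - eps) by rewrite divr_ge0 // ltW.
have w0I : Delta_I Iin (eps / (1 - eps)) w0.
  split => // n nI; split => //.
  rewrite /w0 nI div1r lef_pV2 ?posrE ?mulr_gt0 //; nra.
have [hmean0 hloew0] := hst w0 w0I.
rewrite /OPT.
apply: (@le_trans _ _ (sup [set \tr (Smat G w0 muhat *m rho) |
    rho in [set rho : 'M[R]_p | psd rho /\ \tr rho = 1]])).
  apply: (ge_inf); last by exists w0.
  exists 0 => _ [w hw2 <-]; apply: sup_tr_ge0 pp _ => u.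
  rewrite Smat_qf; apply: sumr_ge0 => n _; rewrite mulr_ge0 ?sqr_ge0 //.
  have [_ hw3] := hw2; by have := hw3 n; rewrite inE => /(_ isT) [].
apply: sup_tr_le pp _ => u.
rewrite Smat_qf (sum_split Iin).
rewrite [\sum_(n in ~: Iin) _]big1 => [|n]; last first.
  by rewrite inE /w0 => /negbTE ->; rewrite mul0r.
rewrite addr0.
set z := dot u (m0 - muhat).
have -> : \sum_(n in Iin) w0 n * dot u (G n - muhat) ^+ 2 =
   \sum_(n in Iin) w0 n * dot u (G n - m0) ^+ 2 +
   2 * z * (\sum_(n in Iin) w0 n * dot u (G n - m0)) + z ^+ 2 * (\sum_(n in Iin) w0 n).
  rewrite [2 * z * _]mulr_sumr [z ^+ 2 * _]mulr_sumr -!big_split /=; apply: eq_bigr => n _.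
  have -> : dot u (G n - muhat) = dot u (G n - m0) + z by rewrite /z -dotDr addrA subrK.
  ring.
rewrite w0in mulr1.
have T1 : \sum_(n in Iin) w0 n * dot u (G n - m0) ^+ 2 <= (opnorm (Sigma theta) + dS) * dot u u.
  have E := wsum_qf (fun n => n \in Iin) w0 (fun n => G n - m0) u.
  simpl in E; rewrite -E.
  have := psd_qf hloew0 u; rewrite mulmxBl dotBr mulmxDl dotDr scalar_qf.
  have := qf_opnorm (Sigma theta) u.
  rewrite -/G -/m0 -/dS; lra.
set S1 := \sum_(n in Iin) w0 n * dot u (G n - m0).
have hS1 : `|S1| <= norm2 u * dm.
  have -> : S1 = dot u (\sum_(n in Iin) w0 n *: (G n - m0)).
    by rewrite dot_sumr; apply: eq_bigr => n _; rewrite dotZr.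
  apply: le_trans (dot_abs _ _) _; apply: ler_wpM2l; [exact: norm2_ge0 | exact: hmean0].
have hz : `|z| <= norm2 u * Rk.
  apply: le_trans (dot_abs _ _) _; apply: ler_wpM2l; first exact: norm2_ge0.
  by rewrite -opprB norm2N.
have hsig : opnorm (Sigma theta) <= sup [set opnorm (Sigma t) | t in B0].
  by apply: (ub_le_sup hub); exists theta.
have nu0 := norm2_ge0 u.
have U := norm2_sq u.
have p1 : z * S1 <= norm2 u * Rk * (norm2 u * dm).
  apply: le_trans (ler_norm _) _; rewrite normrM; apply: ler_pM => //.
have p2 : z ^+ 2 <= (norm2 u * Rk) ^+ 2.
  rewrite -(real_normK (num_real z)) !expr2; apply: ler_pM => //.
have p3 : opnorm (Sigma theta) * dot u u <= sup [set opnorm (Sigma t) | t in B0] * dot u u.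
  by apply: ler_wpM2r => //; exact: dot_ge0.
have p4 : 0 <= (norm2 u * dm) ^+ 2 := sqr_ge0 _.
rewrite /lam -U; rewrite -U in T1 p3.
nra.
Qed.
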